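(* Let ${\bm X}=\{1,\dots,n\}$, ${\bm Y}=\{1,\dots,m\}$, let $m^{\bm X}$ ($n\times n$) and $m^{\bm Y}$ ($m\times m$) be row-stochastic transition matrices, $C\in\mathbb{R}_+^{n\times m}$ a cost matrix, $\delta\in(0,1]$, $\epsilon>0$. Let $C^{\epsilon,\delta,(\infty)}$ be the unique matrix satisfying $C^{\epsilon,\delta,(\infty)}_{ij}=\delta C_{ij}+(1-\delta)d^{\epsilon}_{\mathrm W}(m^{\bm X}_i,m^{\bm Y}_j;C^{\epsilon,\delta,(\infty)})$ for all $i,j$. For each $(i,j)$ let $P_{ij}=(P_{ij}^{kl})_{k,l}$ be the optimal (primal) plan and $f_{ij}=(f^k_{ij})_k$, $g_{ij}=(g^l_{ij})_l$ the dual solutions of the problem $d^\epsilon_{\mathrm W}(m^{\bm X}_i,m^{\bm Y}_j;C^{\epsilon,\delta,(\infty)})$. Define tensors $P=(P^{kl}_{ij})$, $F^{kk'}_{ij}=f^{k'}_{ij}\mathbb{1}_{i=k}$, $G^{ll'}_{ij}=g^{l'}_{ij}\mathbb{1}_{j=l}$, and the gradient tensors $\Delta^{kl}_{ij}=\partial C^{\epsilon,\delta,(\infty)}_{ij}/\partial C_{kl}$, $\Gamma^{kk'}_{ij}=\partial C^{\epsilon,\delta,(\infty)}_{ij}/\partial m^{\bm X}_{kk'}$, $\Theta^{ll'}_{ij}=\partial C^{\epsilon,\delta,(\infty)}_{ij}/\partial m^{\bm Y}_{ll'}$. Viewing these tensors as matrices with rows indexed by the pair $(i,j)$ and columns by the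 upper index pair (so $P$ and $\Delta$ are $nm\times nm$), and letting $I_{nm}$ be the $nm\times nm$ identity, $$\Delta=\delta\big(I_{nm}-(1-\delta)P\big)^{-1},\quad\Gamma=(1-\delta)\big(I_{nm}-(1-\delta)P\big)^{-1}F,\quad\Theta=(1-\delta)\big(I_{nm}-(1-\delta)P\big)^{-1}G.$$
   Context: For $\alpha\in\mathcal{P}({\bm X}),\beta\in\mathcal{P}({\bm Y})$ and cost $D$, $d^{\epsilon}_{\mathrm W}(\alpha,\beta;D)=\min_{P\in\mathcal{C}(\alpha,\beta)}\sum_{k,l}P_{kl}D_{kl}+\epsilon\sum_{k,l}P_{kl}\log P_{kl}$, where $\mathcal{C}(\alpha,\beta)$ is the set of nonnegative $n\times m$ matrices with row sums $\alpha$ and column sums $\beta$; the dual solutions $f,g$ are the optimal dual variables (potentials) associated with the row- and column-marginal constraints. $m^{\bm X}_i$ denotes the $i$-th row of $m^{\bm X}$, $m^{\bm X}_{kk'}$ its $(k,k')$ entry. *)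

(* Defs.v *)
From HB Require Import structures.
From mathcomp Require Import all_boot all_order all_algebra.
From mathcomp Require Import all_classical all_reals all_analysis.
Set Implicit Arguments. Unset Strict Implicit. Unset Printing Implicit Defensive.
Import Order.TTheory GRing.Theory Num.Theory.
Local Open Scope ring_scope.
Local Open Scope classical_set_scope.

Definition coupling (R : realType) (n m : nat) (a : 'I_n -> R) (b : 'I_m -> R)
  (P : 'M[R]_(n, m)) : Prop :=
  [/\ (forall k l, 0 <= P k l),
      (forall k, \sum_(l < m) P k l = a k) &
      (forall l, \sum_(k < n) P k l = b l)].

(* entropic objective  sum P_kl D_kl + eps sum P_kl log P_kl  (0 log 0 = 0) *)
Definition ent_obj (R : realType) (n m : nat) (eps : R) (D P : 'M[R]_(n, m)) : R :=
  \sum_(k < n) \sum_(l < m) P k l * D k l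
  + eps * \sum_(k < n) \sum_(l < m) P k l * ln (P k l).

Definition dW (R : realType) (n m : nat) (eps : R) (a : 'I_n -> R) (b : 'I_m -> R)
  (D : 'M[R]_(n, m)) : R :=
  inf [set ent_obj eps D P | P in coupling a b].

Definition opt_plan (R : realType) (n m : nat) (eps : R) (a : 'I_n -> R) (b : 'I_m -> R)
  (D P : 'M[R]_(n, m)) : Prop :=
  coupling a b P /\ forall Q, coupling a b Q -> ent_obj eps D P <= ent_obj eps D Q.

(* Lagrangian dual of the entropic problem (f, g: multipliers of the row and
   column marginal constraints) *)
Definition dual_obj (R : realType) (n m : nat) (eps : R) (a : 'I_n -> R) (b : 'I_m -> R)
  (D : 'M[R]_(n, m)) (f : 'I_n -> R) (g : 'I_m -> R) : R :=
  \sum_(k < n) f k * a k + \sum_(l < m) g l * b l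
  - eps * \sum_(k < n) \sum_(l < m) expR ((f k + g l - D k l) / eps - 1).

Definition opt_dual (R : realType) (n m : nat) (eps : R) (a : 'I_n -> R) (b : 'I_m -> R)
  (D : 'M[R]_(n, m)) (f : 'I_n -> R) (g : 'I_m -> R) : Prop :=
  forall f' g', dual_obj eps a b D f' g' <= dual_obj eps a b D f g.

Definition row_stochastic (R : realType) (n : nat) (M : 'M[R]_n) : Prop :=
  (forall i j, 0 <= M i j) /\ (forall i, \sum_(j < n) M i j = 1).

Definition fixed_point (R : realType) (n m : nat) (eps delta : R)
  (C : 'M[R]_(n, m)) (mX : 'M[R]_n) (mY : 'M[R]_m) (M : 'M[R]_(n, m)) : Prop :=
  forall i j, M i j = delta * C i j
                      + (1 - delta) * dW eps (fun k => mX i k) (fun l => mY j l) M.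

(* a 4-index tensor T^{kl}_{ij} viewed as a matrix with rows indexed by the
   pair (i,j) and columns by the pair (k,l) *)
Definition flat4 (R : realType) (n1 n2 n3 n4 : nat)
  (T : 'I_n1 -> 'I_n2 -> 'I_n3 -> 'I_n4 -> R) : 'M[R]_(n1 * n2, n3 * n4) :=
  \sum_(i < n1) \sum_(j < n2) \sum_(k < n3) \sum_(l < n4)
    T i j k l *: delta_mx (mxvec_index i j) (mxvec_index k l).

(* Main.v *)
Require Import Defs.
From HB Require Import structures.
From mathcomp Require Import all_boot all_order all_algebra.
From mathcomp Require Import all_classical all_reals all_analysis.
From mathcomp Require Import ring lra.
Import Order.TTheory GRing.Theory Num.Theory.
Import numFieldNormedType.Exports.
Local Open Scope ring_scope.
Local Open Scope classical_set_scope.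
Set Implicit Arguments. Unset Strict Implicit. Unset Printing Implicit Defensive.

Lemma exp_strict (R : realType) (u : R) : expR u = 1 + u -> u = 0.
Proof.
move=> H.
have [u2|u2] := leP (-2) u.
  have e2 : expR u = expR (u / 2) ^+ 2 by rewrite expr2 -expRD; congr expR; field.
  have h1 := expR_ge1Dx (u / 2).
  have h0 : 0 <= 1 + u / 2 by lra.
  have : (1 + u / 2) ^+ 2 <= expR (u / 2) ^+ 2.
    by rewrite ler_pXn2r // ?nnegrE // (le_trans h0).
  rewrite -e2 H => h.
  nra.
have := expR_gt0 u; rewrite H; lra.
Qed.

Lemma exp_upper (R : realType) (u : R) : `|u| <= 1/2 -> expR u <= 1 + u + 2 * u ^+ 2.
Proof.
move=> hu.
have hu' : -(1/2) <= u <= 1/2 by rewrite -ler_norml.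
case/andP: hu' => hu1 hu2.
have h1 := expR_ge1Dx (- u).
have e : expR u * expR (- u) = 1 by rewrite -expRD subrr expR0.
have p := expR_gt0 u.
nra.
Qed.

Lemma fenchel (R : realType) (x y : R) : 0 <= x -> 0 <= x * ln x - x * y + expR (y - 1).
Proof.
rewrite le0r => /orP[/eqP->|x0].
  by rewrite !mul0r subrr add0r ltW // expR_gt0.
set u := y - 1 - ln x.
have e : expR (y - 1) = x * expR u.
  have -> : x * expR u = expR (ln x) * expR u by rewrite lnK.
  by rewrite -expRD /u; congr expR; ring.
rewrite e.
have := expR_ge1Dx u.
have : x * ln x - x * y + x * expR u = x * (expR u - 1 - u) by rewrite /u; ring.
move=> ->; nra.
Qed.

Lemma fenchel_eq (R : realType) (x y : R) : 0 <= x ->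
  x * ln x - x * y + expR (y - 1) = 0 -> x = expR (y - 1).
Proof.
rewrite le0r => /orP[/eqP->|x0].
  by rewrite !mul0r subrr add0r => h; have := expR_gt0 (y - 1); rewrite h ltxx.
set u := y - 1 - ln x.
have e : expR (y - 1) = x * expR u.
  have -> : x * expR u = expR (ln x) * expR u by rewrite lnK.
  by rewrite -expRD /u; congr expR; ring.
rewrite e.
have : x * ln x - x * y + x * expR u = x * (expR u - 1 - u) by rewrite /u; ring.
move=> -> /eqP; rewrite mulf_eq0 gt_eqF //= subr_eq0 subr_eq => /eqP h.
have : u = 0 by apply: exp_strict; rewrite h addrC.
by move=> u0; rewrite u0 expR0 mulr1.
Qed.

Definition phi (R : realType) (x y : R) := x * ln x - x * y + expR (y - 1).

Lemma gap_eq (R : realType) (n m : nat) (eps : R) (a : 'I_n -> R) (b : 'I_m -> R)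
  (D Q : 'M[R]_(n, m)) (f : 'I_n -> R) (g : 'I_m -> R) : 0 < eps ->
  (forall k, \sum_(l < m) Q k l = a k) -> (forall l, \sum_(k < n) Q k l = b l) ->
  ent_obj eps D Q - dual_obj eps a b D f g =
  eps * \sum_(k < n) \sum_(l < m) phi (Q k l) ((f k + g l - D k l) / eps).
Proof.
move=> e0 hr hc.
rewrite /dual_obj.
have -> : \sum_(k < n) f k * a k = \sum_(k < n) \sum_(l < m) f k * Q k l.
  by apply: eq_bigr => k _; rewrite -hr mulr_sumr.
have -> : \sum_(l < m) g l * b l = \sum_(k < n) \sum_(l < m) g l * Q k l.
  rewrite exchange_big /=; apply: eq_bigr => l _; by rewrite -hc mulr_sumr.
rewrite /ent_obj /phi.
have -> : forall x y z w v : R, x + eps * y - (z + w - eps * v) = x + eps * y - z - w + eps * v.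
  by move=> *; ring.
rewrite !mulr_sumr -!sumrN -!big_split /=.
apply: eq_bigr => k _.
rewrite !mulr_sumr -!sumrN -!big_split /=.
apply: eq_bigr => l _.
field; by rewrite gt_eqF.
Qed.

Lemma phi_ge0 (R : realType) (x y : R) : 0 <= x -> 0 <= phi x y.
Proof. exact: fenchel. Qed.

Lemma weak_dual (R : realType) (n m : nat) (eps : R) (a : 'I_n -> R) (b : 'I_m -> R)
  (D Q : 'M[R]_(n, m)) (f : 'I_n -> R) (g : 'I_m -> R) : 0 < eps ->
  coupling a b Q -> dual_obj eps a b D f g <= ent_obj eps D Q.
Proof.
move=> e0 [h0 hr hc]; rewrite -subr_ge0 (gap_eq _ _ _ e0 hr hc).
apply: mulr_ge0; first exact: ltW.
by apply: sumr_ge0 => k _; apply: sumr_ge0 => l _; apply: phi_ge0.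
Qed.

Lemma dW_le (R : realType) (n m : nat) (eps : R) (a : 'I_n -> R) (b : 'I_m -> R)
  (D Q : 'M[R]_(n, m)) : 0 < eps -> coupling a b Q -> dW eps a b D <= ent_obj eps D Q.
Proof.
move=> e0 cQ; rewrite /dW.
have : has_lbound [set ent_obj eps D P | P in coupling a b].
  exists (dual_obj eps a b D (fun=> 0) (fun=> 0)) => _ [P cP <-].
  exact: weak_dual.
move/ge_inf; apply; by exists Q.
Qed.

Lemma dual_le_dW (R : realType) (n m : nat) (eps : R) (a : 'I_n -> R) (b : 'I_m -> R)
  (D Q : 'M[R]_(n, m)) f g : 0 < eps -> coupling a b Q ->
  dual_obj eps a b D f g <= dW eps a b D.
Proof.
move=> e0 cQ; rewrite /dW; apply: lb_le_inf.
  by exists (ent_obj eps D Q); exists Q.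
by move=> _ [P cP <-]; exact: weak_dual.
Qed.

Lemma dW_lip (R : realType) (n m : nat) (eps : R) (a : 'I_n -> R) (b : 'I_m -> R)
  (D D' Q : 'M[R]_(n, m)) (c : R) : 0 < eps -> coupling a b Q ->
  \sum_(k < n) a k = 1 -> (forall k l, `|D k l - D' k l| <= c) ->
  dW eps a b D <= dW eps a b D' + c.
Proof.
move=> e0 cQ sa hc; rewrite -lerBlDr /dW; apply: lb_le_inf.
  by exists (ent_obj eps D' Q); exists Q.
move=> _ [P cP <-]; rewrite lerBlDr.
apply: (le_trans (dW_le D e0 cP)).
have -> : ent_obj eps D P = ent_obj eps D' P + \sum_(k < n) \sum_(l < m) P k l * (D k l - D' k l).
  rewrite /ent_obj -addrA [_ + \sum_(k < n) _]addrC addrA; congr (_ + _).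
  rewrite -big_split /=; apply: eq_bigr => k _; rewrite -big_split /=.
  by apply: eq_bigr => l _; ring.
rewrite lerD2l.
case: cP => p0 pr pc.
have -> : c = \sum_(k < n) \sum_(l < m) P k l * c.
  by rewrite -[LHS]mulr1 -sa mulr_sumr; apply: eq_bigr => k _; rewrite -pr mulr_sumr; apply: eq_bigr => l _; rewrite mulrC.
apply: ler_sum => k _; apply: ler_sum => l _.
apply: (le_trans (ler_norm _)); rewrite normrM ger0_norm //.
by apply: ler_wpM2l.
Qed.

Lemma sum_ind (R : realType) (I : finType) (F : I -> R) (k : I) :
  \sum_(i : I) F i * (i == k)%:R = F k.
Proof.
rewrite (bigD1 k) //= eqxx mulr1 big1 ?addr0 // => i /negPf ->; by rewrite mulr0.
Qed.

Lemma scalar_foc (R : realType) (eps a S : R) : 0 < eps -> 0 <= S ->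
  (forall s, s * a <= eps * ((expR (s / eps) - 1) * S)) -> a = S.
Proof.
move=> e0; rewrite le0r => /orP[/eqP->|S0] H.
  have := H 1; have := H (-1); rewrite !mulr0; lra.
have a0 : 0 < a.
  have := H (- eps).
  have : expR (- eps / eps) < 1 by rewrite mulNr divff ?gt_eqF // -expR0 ltr_expR; lra.
  move: (expR _) => e he h.
  have : eps * ((e - 1) * S) < 0 by rewrite pmulr_rlt0 // pmulr_llt0 //; lra.
  move=> h2; have : 0 < eps * a by nra.
  by rewrite pmulr_rgt0.
set u := ln (S / a).
have Sa : S = a * expR u by rewrite /u lnK ?posrE ?divr_gt0 //; field; rewrite gt_eqF.
have := H (- (eps * u)).
have -> : expR (- (eps * u) / eps) = a / S.
  by rewrite mulNr mulrAC divff ?gt_eqF // mul1r expRN /u lnK ?posrE ?divr_gt0 // invf_div.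
have -> : eps * ((a / S - 1) * S) = eps * (a - S) by field; rewrite gt_eqF.
rewrite Sa => h.
have h2 : expR u <= 1 + u.
  have : eps * a * (expR u - 1 - u) <= 0 by nra.
  by rewrite pmulr_rle0 ?mulr_gt0 //; lra.
have := expR_ge1Dx u => h3.
have u0 : u = 0 by apply: exp_strict; apply/eqP; rewrite eq_le h2 h3.
by rewrite u0 expR0 mulr1.
Qed.

Lemma foc_row (R : realType) (n m : nat) (eps : R) (a : 'I_n -> R) (b : 'I_m -> R)
  (D : 'M[R]_(n, m)) f g : 0 < eps -> opt_dual eps a b D f g ->
  forall k, a k = \sum_(l < m) expR ((f k + g l - D k l) / eps - 1).
Proof.
move=> e0 H k; apply: (scalar_foc (eps:=eps)) => //.
  by apply: sumr_ge0 => l _; apply: ltW; apply: expR_gt0.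
move=> s.
have := H (fun k' => f k' + s * (k' == k)%:R) g.
rewrite /dual_obj.
have -> : \sum_(k0 < n) (f k0 + s * (k0 == k)%:R) * a k0 = \sum_(k0 < n) f k0 * a k0 + s * a k.
  under eq_bigr do rewrite mulrDl.
  rewrite big_split /=; congr (_ + _).
  under eq_bigr do rewrite mulrAC -mulrA.
  by rewrite -mulr_sumr sum_ind.
have -> : \sum_(k0 < n) \sum_(l < m) expR ((f k0 + s * (k0 == k)%:R + g l - D k0 l) / eps - 1)
   = \sum_(k0 < n) \sum_(l < m) expR ((f k0 + g l - D k0 l) / eps - 1)
     + (expR (s / eps) - 1) * \sum_(l < m) expR ((f k + g l - D k l) / eps - 1).
  rewrite -(sum_ind (fun k0 => (expR (s / eps) - 1) * \sum_(l < m) expR ((f k0 + g l - D k0 l) / eps - 1)) k) -big_split /=.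
  apply: eq_bigr => k0 _.
  case: eqP => [->|_] /=.
    rewrite !mulr1 mulr_sumr -big_split /=; apply: eq_bigr => l _.
    have -> : expR ((f k + g l - D k l) / eps - 1) + (expR (s / eps) - 1) * expR ((f k + g l - D k l) / eps - 1) = expR (s / eps) * expR ((f k + g l - D k l) / eps - 1) by ring.
    by rewrite -expRD; congr expR; field; rewrite gt_eqF.
  by rewrite !mulr0 !addr0.
lra.
Qed.

Lemma foc_col (R : realType) (n m : nat) (eps : R) (a : 'I_n -> R) (b : 'I_m -> R)
  (D : 'M[R]_(n, m)) f g : 0 < eps -> opt_dual eps a b D f g ->
  forall l, b l = \sum_(k < n) expR ((f k + g l - D k l) / eps - 1).
Proof.
move=> e0 H l; apply: (scalar_foc (eps:=eps)) => //.
  by apply: sumr_ge0 => k _; apply: ltW; apply: expR_gt0.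
move=> s.
have := H f (fun l' => g l' + s * (l' == l)%:R).
rewrite /dual_obj.
have -> : \sum_(l0 < m) (g l0 + s * (l0 == l)%:R) * b l0 = \sum_(l0 < m) g l0 * b l0 + s * b l.
  under eq_bigr do rewrite mulrDl.
  rewrite big_split /=; congr (_ + _).
  under eq_bigr do rewrite mulrAC -mulrA.
  by rewrite -mulr_sumr sum_ind.
have -> : \sum_(k < n) \sum_(l0 < m) expR ((f k + (g l0 + s * (l0 == l)%:R) - D k l0) / eps - 1)
   = \sum_(k < n) \sum_(l0 < m) expR ((f k + g l0 - D k l0) / eps - 1)
     + (expR (s / eps) - 1) * \sum_(k < n) expR ((f k + g l - D k l) / eps - 1).
  rewrite mulr_sumr -big_split /=.
  apply: eq_bigr => k _.
  rewrite -(sum_ind (fun l0 => (expR (s / eps) - 1) * expR ((f k + g l0 - D k l0) / eps - 1)) l) -big_split /=.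
  apply: eq_bigr => l0 _.
  case: eqP => [->|_] /=.
    rewrite !mulr1.
    have -> : expR ((f k + g l - D k l) / eps - 1) + (expR (s / eps) - 1) * expR ((f k + g l - D k l) / eps - 1) = expR (s / eps) * expR ((f k + g l - D k l) / eps - 1) by ring.
    by rewrite -expRD; congr expR; field; rewrite gt_eqF.
  by rewrite !mulr0 !addr0.
lra.
Qed.

Lemma plan_exp (R : realType) (n m : nat) (eps : R) (a : 'I_n -> R) (b : 'I_m -> R)
  (D P : 'M[R]_(n, m)) f g : 0 < eps -> opt_plan eps a b D P -> opt_dual eps a b D f g ->
  forall k l, P k l = expR ((f k + g l - D k l) / eps - 1).
Proof.
move=> e0 [cP optP] od.
set Qs : 'M[R]_(n, m) := \matrix_(k, l) expR ((f k + g l - D k l) / eps - 1).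
have cQ : coupling a b Qs.
  split.
  - by move=> k l; rewrite mxE ltW // expR_gt0.
  - by move=> k; rewrite (foc_row e0 od k); apply: eq_bigr => l _; rewrite mxE.
  - by move=> l; rewrite (foc_col e0 od l); apply: eq_bigr => k _; rewrite mxE.
have gQ : ent_obj eps D Qs - dual_obj eps a b D f g = 0.
  case: cQ => _ hr hc; rewrite (gap_eq _ _ _ e0 hr hc).
  rewrite big1 ?mulr0 // => k _; rewrite big1 // => l _.
  by rewrite /phi mxE expRK; ring.
have gP : ent_obj eps D P - dual_obj eps a b D f g = 0.
  apply/eqP; rewrite eq_le; apply/andP; split.
    by rewrite -gQ lerD2r; apply: optP.
  by rewrite subr_ge0; apply: weak_dual.
case: cP => p0 hr hc.
move: gP; rewrite (gap_eq _ _ _ e0 hr hc) => /eqP; rewrite mulf_eq0 gt_eqF //= => /eqP.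
move/psumr_eq0P => H k l.
have H1 : \sum_(l < m) phi (P k l) ((f k + g l - D k l) / eps) = 0.
  by apply: H => // k' _; apply: sumr_ge0 => l' _; exact: phi_ge0.
move/psumr_eq0P: H1 => H2.
apply: fenchel_eq (p0 k l) _; apply: H2 => // l' _; exact: phi_ge0.
Qed.

Lemma fin_small (R : realType) (I : finType) (c : I -> R) :
  (forall i, 0 < c i) -> exists2 e : R, 0 < e & forall i, e <= c i.
Proof.
move=> hc; exists (\big[Order.min/1]_i c i).
  by apply/bigmin_gtP; split => // i _; exact: hc.
by move=> i; exact: bigmin_le.
Qed.

Lemma ent_dual_eq (R : realType) (n m : nat) (eps : R) (a : 'I_n -> R) (b : 'I_m -> R)
  (D P : 'M[R]_(n, m)) f g : 0 < eps ->
  (forall k, \sum_(l < m) P k l = a k) -> (forall l, \sum_(k < n) P k l = b l) ->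
  (forall k l, P k l = expR ((f k + g l - D k l) / eps - 1)) ->
  ent_obj eps D P = dual_obj eps a b D f g.
Proof.
move=> e0 hr hc hP; apply/eqP; rewrite -subr_eq0; apply/eqP.
rewrite (gap_eq _ _ _ e0 hr hc) big1 ?mulr0 // => k _; rewrite big1 // => l _.
by rewrite /phi hP expRK; ring.
Qed.

Lemma ent_sum (R : realType) (n m : nat) (eps : R) (D Q : 'M[R]_(n, m)) :
  ent_obj eps D Q = \sum_(k < n) \sum_(l < m) (Q k l * D k l + eps * (Q k l * ln (Q k l))).
Proof.
rewrite /ent_obj mulr_sumr -big_split; apply: eq_bigr => k _ /=.
by rewrite mulr_sumr -big_split.
Qed.

Lemma sum2_comb (R : realType) (n m : nat) (A B C : 'I_n -> 'I_m -> R) (t s : R) :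
  \sum_(k < n) \sum_(l < m) A k l + t * \sum_(k < n) \sum_(l < m) B k l
  + s * \sum_(k < n) \sum_(l < m) C k l
  = \sum_(k < n) \sum_(l < m) (A k l + t * B k l + s * C k l).
Proof.
rewrite !mulr_sumr -!big_split; apply: eq_bigr => k _ /=.
by rewrite !mulr_sumr -!big_split.
Qed.

Lemma sumX (R : realType) (n m : nat) (a al f : 'I_n -> R) (b be g : 'I_m -> R) :
  \sum_(k < n) a k = 1 -> \sum_(l < m) b l = 1 ->
  \sum_(k < n) al k = 0 -> \sum_(l < m) be l = 0 ->
  \sum_(k < n) \sum_(l < m) ((al k * b l + a k * be l) * (f k + g l))
  = \sum_(k < n) f k * al k + \sum_(l < m) g l * be l.
Proof.
move=> sa sb sal sbe.
have -> : \sum_(k < n) \sum_(l < m) ((al k * b l + a k * be l) * (f k + g l))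
  = \sum_(k < n) (f k * al k * \sum_(l < m) b l + al k * \sum_(l < m) b l * g l
                  + a k * f k * \sum_(l < m) be l + a k * \sum_(l < m) be l * g l).
  apply: eq_bigr => k _; rewrite !mulr_sumr -!big_split /=; apply: eq_bigr => l _; ring.
rewrite !big_split /= sb sbe.
under eq_bigr do rewrite mulr1.
rewrite -!mulr_suml sal sa mul0r mulr0 !addr0 mul1r; congr (_ + _); apply: eq_bigr => l _; by rewrite mulrC.
Qed.

Lemma term_upper (R : realType) (eps p x d v t : R) : 0 < eps -> 0 < p ->
  `|t * x| <= p / 2 ->
  (p + t * x) * (d + t * v) + eps * ((p + t * x) * ln (p + t * x))
  <= p * d + eps * (p * ln p) + t * (p * v + x * (d + eps * (ln p + 1)))
     + t ^+ 2 * (x * v + eps * (x ^+ 2 / p)).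
Proof.
move=> e0 p0 htx.
have htx' : - (p / 2) <= t * x <= p / 2 by rewrite -ler_norml.
case/andP: htx' => h1 h2.
have q0 : 0 < p + t * x by lra.
have hln : ln (p + t * x) <= ln p + t * x / p.
  have -> : p + t * x = p * (1 + t * x / p) by field; rewrite gt_eqF.
  have r1 : - (1 / 2) <= t * x / p by rewrite ler_pdivlMr //; lra.
  have r0 : 0 < 1 + t * x / p by lra.
  rewrite lnM ?posrE // lerD2l; apply: le_ln1Dx; lra.
apply: (le_trans (y := (p + t * x) * (d + t * v) + eps * ((p + t * x) * (ln p + t * x / p)))).
  by rewrite lerD2l !ler_pM2l.
rewrite le_eqVlt; apply/orP; left; apply/eqP; field; by rewrite gt_eqF.
Qed.

Lemma sum2_scale (R : realType) (n m : nat) (F : 'I_n -> 'I_m -> R) (c : R) :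
  \sum_(k < n) \sum_(l < m) (c * F k l) = c * \sum_(k < n) \sum_(l < m) F k l.
Proof. rewrite mulr_sumr; apply: eq_bigr => k _; by rewrite mulr_sumr. Qed.

Lemma term_lower (R : realType) (eps p v t : R) : 0 < eps -> 0 < p ->
  `|t * v / eps| <= 1 / 2 ->
  eps * (p * expR (- (t * v / eps)))
  <= eps * p + t * (- (p * v)) + t ^+ 2 * (2 / eps * (p * v ^+ 2)).
Proof.
move=> e0 p0 h.
have h' : `|- (t * v / eps)| <= 1 / 2 by rewrite normrN.
have := exp_upper h'.
move: (expR _) => E hE.
have ep : 0 < eps * p by rewrite mulr_gt0.
apply: (le_trans (y := eps * (p * (1 + - (t * v / eps) + 2 * (- (t * v / eps)) ^+ 2)))).
  by rewrite ler_pM2l // ler_pM2l.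
rewrite le_eqVlt; apply/orP; left; apply/eqP; field; by rewrite gt_eqF.
Qed.

Lemma dW_expand (R : realType) (n m : nat) (eps : R) (a : 'I_n -> R) (b : 'I_m -> R)
  (D P0 : 'M[R]_(n, m)) (f : 'I_n -> R) (g : 'I_m -> R) (al : 'I_n -> R) (be : 'I_m -> R)
  (V : 'M[R]_(n, m)) :
  0 < eps -> coupling a b P0 ->
  (forall k l, P0 k l = expR ((f k + g l - D k l) / eps - 1)) ->
  \sum_(k < n) a k = 1 -> \sum_(l < m) b l = 1 ->
  \sum_(k < n) al k = 0 -> \sum_(l < m) be l = 0 ->
  exists K : R, exists2 e : R, 0 < e & forall t, `|t| <= e ->
   `|dW eps (fun k => a k + t * al k) (fun l => b l + t * be l) (D + t *: V)
     - ent_obj eps D P0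
     - t * (\sum_(k < n) \sum_(l < m) P0 k l * V k l + \sum_(k < n) f k * al k
            + \sum_(l < m) g l * be l)| <= K * t ^+ 2.
Proof.
move=> e0 [p0 hr hc] hP sa sb sal sbe.
have pp : forall k l, 0 < P0 k l by move=> k l; rewrite hP expR_gt0.
pose X := fun k l => al k * b l + a k * be l.
pose K1 := \sum_(k < n) \sum_(l < m) (X k l * V k l + eps * (X k l ^+ 2 / P0 k l)).
pose K2 := \sum_(k < n) \sum_(l < m) (2 / eps * (P0 k l * V k l ^+ 2)).
have K2p : 0 <= K2.
  apply: sumr_ge0 => k _; apply: sumr_ge0 => l _; apply: mulr_ge0.
    by rewrite divr_ge0 // ltW.
  by rewrite mulr_ge0 ?sqr_ge0 // ltW.
have hL : \sum_(k < n) \sum_(l < m) P0 k l * V k l + \sum_(k < n) f k * al k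
            + \sum_(l < m) g l * be l
          = \sum_(k < n) \sum_(l < m) (P0 k l * V k l + X k l * (f k + g l)).
  rewrite -addrA -(sumX f g sa sb sal sbe) -big_split /=; apply: eq_bigr => k _.
  by rewrite -big_split.
pose c := fun p : 'I_n * 'I_m =>
   Order.min (P0 p.1 p.2 / (2 * (`|X p.1 p.2| + 1))) (eps / (2 * (`|V p.1 p.2| + 1))).
have hc' : forall p, 0 < c p.
  move=> p; rewrite lt_min; apply/andP; split; apply: divr_gt0 => //;
  by rewrite ?pp // mulr_gt0 // ltr_pwDr.
have [e e0' he] := fin_small hc'.
exists (`|K1| + K2), e => // t ht.
have hX : forall k l, `|t * X k l| <= P0 k l / 2.
  move=> k l; have := he (k, l); rewrite le_min => /andP[/= h _].
  have x1 : 0 < `|X k l| + 1 by apply: ltr_pwDr.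
  have tx : `|t| * (2 * (`|X k l| + 1)) <= P0 k l.
    by rewrite -ler_pdivlMr ?mulr_gt0 // (le_trans ht).
  rewrite normrM.
  have := normr_ge0 t; have := normr_ge0 (X k l); nra.
have hV : forall k l, `|t * V k l / eps| <= 1 / 2.
  move=> k l; have := he (k, l); rewrite le_min => /andP[_ /= h].
  have x1 : 0 < `|V k l| + 1 by apply: ltr_pwDr.
  have tx : `|t| * (2 * (`|V k l| + 1)) <= eps.
    by rewrite -ler_pdivlMr ?mulr_gt0 // (le_trans ht).
  rewrite !normrM normrV ?unitfE ?gt_eqF // (gtr0_norm e0) ler_pdivrMr //.
  have := normr_ge0 t; have := normr_ge0 (V k l); nra.
pose Qt : 'M[R]_(n, m) := \matrix_(k, l) (P0 k l + t * X k l).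
have cQ : coupling (fun k => a k + t * al k) (fun l => b l + t * be l) Qt.
  split.
  - move=> k l; rewrite mxE; have := hX k l; rewrite ler_norml => /andP[h1 _].
    have := pp k l; lra.
  - move=> k; under eq_bigr do rewrite mxE.
    rewrite big_split /= hr -mulr_sumr; congr (_ + t * _).
    by rewrite big_split /= -mulr_sumr -mulr_sumr sb sbe mulr1 mulr0 addr0.
  - move=> l; under eq_bigr do rewrite mxE.
    rewrite big_split /= hc -mulr_sumr; congr (_ + t * _).
    by rewrite big_split /= -!mulr_suml sa sal mul1r mul0r add0r.
have up : dW eps (fun k => a k + t * al k) (fun l => b l + t * be l) (D + t *: V)
          <= ent_obj eps D P0 + t * \sum_(k < n) \sum_(l < m) (P0 k l * V k l + X k l * (f k + g l))
             + t ^+ 2 * K1.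
  apply: (le_trans (dW_le _ e0 cQ)).
  rewrite !ent_sum /K1 sum2_comb; apply: ler_sum => k _; apply: ler_sum => l _.
  rewrite !mxE.
  have := term_upper (D k l) (V k l) e0 (pp k l) (hX k l).
  have -> : D k l + eps * (ln (P0 k l) + 1) = f k + g l.
    by rewrite hP expRK; field; rewrite gt_eqF.
  by [].
have lo : ent_obj eps D P0 + t * \sum_(k < n) \sum_(l < m) (P0 k l * V k l + X k l * (f k + g l))
          - t ^+ 2 * K2
          <= dW eps (fun k => a k + t * al k) (fun l => b l + t * be l) (D + t *: V).
  apply: (le_trans _ (dual_le_dW (D + t *: V) f g e0 cQ)).
  rewrite (ent_dual_eq e0 hr hc hP) -hL /dual_obj.
  have hE : eps * \sum_(k < n) \sum_(l < m) expR ((f k + g l - (D + t *: V) k l) / eps - 1)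
     <= eps * \sum_(k < n) \sum_(l < m) expR ((f k + g l - D k l) / eps - 1)
        + t * \sum_(k < n) \sum_(l < m) (- (P0 k l * V k l)) + t ^+ 2 * K2.
    rewrite -[X in X <= _]sum2_scale.
    rewrite -(@sum2_scale R n m (fun k l => expR ((f k + g l - D k l) / eps - 1)) eps).
    rewrite /K2 sum2_comb; apply: ler_sum => k _; apply: ler_sum => l _.
    have -> : expR ((f k + g l - (D + t *: V) k l) / eps - 1)
              = P0 k l * expR (- (t * V k l / eps)).
      rewrite hP -expRD !mxE; congr expR; field; by rewrite gt_eqF.
    rewrite -hP; exact: term_lower e0 (pp k l) (hV k l).
  have s1 : \sum_(k < n) f k * (a k + t * al k) = \sum_(k < n) f k * a k + t * \sum_(k < n) f k * al k.
    rewrite mulr_sumr -big_split; apply: eq_bigr => k _ /=; ring.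
  have s2 : \sum_(l < m) g l * (b l + t * be l) = \sum_(l < m) g l * b l + t * \sum_(l < m) g l * be l.
    rewrite mulr_sumr -big_split; apply: eq_bigr => k _ /=; ring.
  have s3 : \sum_(k < n) \sum_(l < m) (- (P0 k l * V k l)) = - \sum_(k < n) \sum_(l < m) P0 k l * V k l.
    rewrite -sumrN; apply: eq_bigr => k _; by rewrite sumrN.
  rewrite s1 s2; rewrite s3 in hE.
  rewrite !mulrDr in hE *; rewrite mulrN in hE; lra.
have hK1 : t ^+ 2 * K1 <= t ^+ 2 * `|K1| by rewrite ler_wpM2l ?sqr_ge0 ?ler_norm.
have t2 : 0 <= t ^+ 2 * K2 by rewrite mulr_ge0 ?sqr_ge0.
rewrite -hL in up lo.
rewrite mulrDl [_ * t ^+ 2]mulrC [K2 * _]mulrC.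
have t3 : 0 <= t ^+ 2 * `|K1| by rewrite mulr_ge0 ?sqr_ge0.
move: up lo hK1 t2 t3.
set W := dW _ _ _ _; set E0 := ent_obj _ _ _; set TL := t * _.
move: (t ^+ 2 * K1) (t ^+ 2 * `|K1|) (t ^+ 2 * K2) => u1 u2 u3.
move=> h1 h2 h3 h4 h5; rewrite ler_norml; apply/andP; split; lra.
Qed.

Lemma dW_base (R : realType) (n m : nat) (eps : R) (a : 'I_n -> R) (b : 'I_m -> R)
  (D P0 : 'M[R]_(n, m)) (f : 'I_n -> R) (g : 'I_m -> R) :
  0 < eps -> coupling a b P0 ->
  (forall k l, P0 k l = expR ((f k + g l - D k l) / eps - 1)) ->
  dW eps a b D = ent_obj eps D P0.
Proof.
move=> e0 cP hP; apply/eqP; rewrite eq_le (dW_le D e0 cP) /=.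
case: (cP) => _ hr hc; rewrite (ent_dual_eq e0 hr hc hP).
exact: (dual_le_dW D f g e0 cP).
Qed.

Lemma prod_coupling (R : realType) (n m : nat) (a : 'I_n -> R) (b : 'I_m -> R) :
  (forall k, 0 <= a k) -> (forall l, 0 <= b l) ->
  \sum_(k < n) a k = 1 -> \sum_(l < m) b l = 1 ->
  coupling a b (\matrix_(k, l) (a k * b l)).
Proof.
move=> ha hb sa sb; split.
- by move=> k l; rewrite mxE mulr_ge0.
- by move=> k; under eq_bigr do rewrite mxE; rewrite -mulr_sumr sb mulr1.
- by move=> l; under eq_bigr do rewrite mxE; rewrite -mulr_suml sa mul1r.
Qed.

Lemma sum_pos (R : realType) (I : finType) (F : I -> R) (i0 : I) :
  (forall i, 0 <= F i) -> 0 < F i0 -> 0 < \sum_i F i.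
Proof.
move=> h0 h1; rewrite (bigD1 i0) //=.
have : 0 <= \sum_(i | i != i0) F i by apply: sumr_ge0.
lra.
Qed.

Lemma le_sum_single (R : realType) (I : finType) (F : I -> R) (i0 : I) :
  (forall i, 0 <= F i) -> F i0 <= \sum_i F i.
Proof.
move=> h0; rewrite (bigD1 i0) //=.
have : 0 <= \sum_(i | i != i0) F i by apply: sumr_ge0.
lra.
Qed.

Lemma rs_perturb (R : realType) (n : nat) (M H : 'M[R]_n) (t : R) :
  row_stochastic M -> (forall k, \sum_(k' < n) H k k' = 0) ->
  (forall k k', `|t * H k k'| <= M k k') -> row_stochastic (M + t *: H).
Proof.
move=> [h0 h1] hH ht; split.
- move=> k k'; rewrite !mxE; have := ht k k'; rewrite ler_norml; lra.
- move=> k; under eq_bigr do rewrite !mxE.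
  by rewrite big_split /= h1 -mulr_sumr hH mulr0 addr0.
Qed.

Lemma deriv_quad (R : realType) (F : R -> R) (L K e : R) : 0 < e ->
  (forall t, `|t| <= e -> `|F t - F 0 - t * L| <= K * t ^+ 2) -> is_derive (0:R) (1:R) F L.
Proof.
move=> e0 H.
have cv : (fun h => h^-1 *: ((F \o shift 0) (h *: 1) - F 0)) @ 0^' --> L.
  apply/cvgrPdist_le => r r0.
  have K1 : 0 < `|K| + 1 by rewrite ltr_wpDl.
  near=> h.
  have hn0 : h != 0 by near: h; exact: nbhs_dnbhs_neq.
  have he : `|h| <= e by near: h; exact: dnbhs0_le.
  have hr : `|h| <= r / (`|K| + 1) by near: h; apply: dnbhs0_le; rewrite divr_gt0.
  rewrite /= addr0 [h *: 1]mulr1.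
  have -> : L - h^-1 * (F h - F 0) = - h^-1 * (F h - F 0 - h * L).
    by field.
  rewrite normrM normrN normrV ?unitfE //.
  have := H h he.
  rewrite -(real_normK (num_real h)).
  move=> Hh.
  rewrite mulrC ler_pdivrMr ?normr_gt0 //; apply: (le_trans Hh).
  have hr' : (`|K| + 1) * `|h| <= r by rewrite mulrC -ler_pdivlMr.
  have kk : K <= `|K| := ler_norm K.
  have a0 : 0 <= `|h| := normr_ge0 h.
  nra.
apply: DeriveDef; first exact: cvgP cv.
exact: cvg_lim cv.
Unshelve. all: by end_near. Qed.

Lemma main_deriv (R : realType) (n m : nat) (mX : 'M[R]_n) (mY : 'M[R]_m)
  (C : 'M[R]_(n, m)) (delta eps : R)
  (Cinf : 'M[R]_(n, m) -> 'M[R]_n -> 'M[R]_m -> 'M[R]_(n, m))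
  (P : 'I_n -> 'I_m -> 'M[R]_(n, m))
  (f : 'I_n -> 'I_m -> 'I_n -> R) (g : 'I_n -> 'I_m -> 'I_m -> R) :
  row_stochastic mX -> row_stochastic mY ->
  0 < delta <= 1 -> 0 < eps ->
  (forall C' mX' mY', row_stochastic mX' -> row_stochastic mY' ->
     fixed_point eps delta C' mX' mY' (Cinf C' mX' mY')) ->
  (forall i j, opt_plan eps (fun k => mX i k) (fun l => mY j l)
                 (Cinf C mX mY) (P i j)) ->
  (forall i j, opt_dual eps (fun k => mX i k) (fun l => mY j l)
                 (Cinf C mX mY) (f i j) (g i j)) ->
  forall (E : 'M[R]_(n, m)) (HX : 'M[R]_n) (HY : 'M[R]_m),
  (forall k, \sum_(k' < n) HX k k' = 0) -> (forall l, \sum_(l' < m) HY l l' = 0) ->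
  forall v : 'I_n -> 'I_m -> R,
  (forall i j, v i j = delta * E i j + (1 - delta) *
      (\sum_(k < n) \sum_(l < m) P i j k l * v k l + \sum_(k < n) f i j k * HX i k
       + \sum_(l < m) g i j l * HY j l)) ->
  forall i j, is_derive (0 : R) (1 : R)
     (fun t => Cinf (C + t *: E) (mX + t *: HX) (mY + t *: HY) i j) (v i j).
Proof.
move=> hX hY /andP[d0 d1] e0 hC hP hD E HX HY sHX sHY v hv i0 j0.
set M0 := Cinf C mX mY.
have fp0 : fixed_point eps delta C mX mY M0 := hC C mX mY hX hY.
have Pexp : forall i j k l, P i j k l = expR ((f i j k + g i j l - M0 k l) / eps - 1).
  by move=> i j; apply: plan_exp e0 (hP i j) (hD i j).
have cP : forall i j, coupling (fun k => mX i k) (fun l => mY j l) (P i j).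
  by move=> i j; case: (hP i j).
have Ppos : forall i j k l, 0 < P i j k l by move=> i j k l; rewrite Pexp expR_gt0.
have mXpos : forall k k', 0 < mX k k'.
  move=> k k'; case: (cP k j0) => p0 hr hc; rewrite -hr.
  by apply: (@sum_pos _ _ _ j0) => // l; exact: p0.
have mYpos : forall l l', 0 < mY l l'.
  move=> l l'; case: (cP i0 l) => p0 hr hc; rewrite -hc.
  by apply: (@sum_pos _ _ _ i0) => // k; exact: p0.
case: (hX) => hX0 hX1; case: (hY) => hY0 hY1.
pose Vm : 'M[R]_(n, m) := \matrix_(k, l) v k l.
pose L := fun i j => \sum_(k < n) \sum_(l < m) P i j k l * Vm k l
   + \sum_(k < n) f i j k * HX i k + \sum_(l < m) g i j l * HY j l.
have hvL : forall i j, v i j = delta * E i j + (1 - delta) * L i j.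
  move=> i j; rewrite hv /L; congr (_ + _ * (_ + _ + _)).
  by apply: eq_bigr => k _; apply: eq_bigr => l _; rewrite mxE.
pose ent0 := fun i j => ent_obj eps M0 (P i j).
have base : forall i j, M0 i j = delta * C i j + (1 - delta) * ent0 i j.
  move=> i j; rewrite {1}fp0 /ent0; congr (_ + _ * _).
  exact: dW_base e0 (cP i j) (Pexp i j).
have ex : forall p : 'I_n * 'I_m, exists Ke : R * R, 0 < Ke.2 /\ forall t, `|t| <= Ke.2 ->
   `|dW eps (fun k => mX p.1 k + t * HX p.1 k) (fun l => mY p.2 l + t * HY p.2 l) (M0 + t *: Vm)
     - ent0 p.1 p.2 - t * L p.1 p.2| <= Ke.1 * t ^+ 2.
  move=> [i j] /=.
  have [K [e ep H]] := dW_expand (al := fun k => HX i k) (be := fun l => HY j l) Vm e0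
     (cP i j) (Pexp i j) (hX1 i) (hY1 j) (sHX i) (sHY j).
  by exists (K, e); split.
have [KE hKE] := choice ex.
pose Kt := \sum_(p : 'I_n * 'I_m) `|(KE p).1|.
have hKt : forall p, (KE p).1 <= Kt.
  move=> p; apply: (le_trans (ler_norm _)).
  by apply: (@le_sum_single _ _ (fun p => `|(KE p).1|)) => q.
have Kt0 : 0 <= Kt by apply: sumr_ge0.
have [e1 e1p he1] := fin_small (fun p => (hKE p).1).
pose cX := fun p : 'I_n * 'I_n => mX p.1 p.2 / (`|HX p.1 p.2| + 1).
have [e2 e2p he2] := @fin_small R _ cX (fun p => divr_gt0 (mXpos p.1 p.2) (ltr_pwDr ltr01 (normr_ge0 _))).
pose cY := fun p : 'I_m * 'I_m => mY p.1 p.2 / (`|HY p.1 p.2| + 1).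
have [e3 e3p he3] := @fin_small R _ cY (fun p => divr_gt0 (mYpos p.1 p.2) (ltr_pwDr ltr01 (normr_ge0 _))).
pose e := Order.min e1 (Order.min e2 e3).
have ep : 0 < e by rewrite /e !lt_min e1p e2p e3p.
apply: (deriv_quad (K := Kt / delta) ep) => t ht.
have ht1 : `|t| <= e1 by apply: (le_trans ht); rewrite /e ge_min lexx.
have ht2 : `|t| <= e2 by apply: (le_trans ht); rewrite /e !ge_min lexx orbT.
have ht3 : `|t| <= e3 by apply: (le_trans ht); rewrite /e !ge_min lexx !orbT.
have small : forall (x h c : R), 0 < x -> `|t| <= c -> c <= x / (`|h| + 1) -> `|t * h| <= x.
  move=> x h c x0 tc cx; have h1 : 0 < `|h| + 1 by apply: ltr_pwDr.
  have : `|t| * (`|h| + 1) <= x by rewrite -ler_pdivlMr // (le_trans tc).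
  rewrite normrM; have := normr_ge0 t; have := normr_ge0 h; nra.
have rsX : row_stochastic (mX + t *: HX).
  apply: rs_perturb => // k k'; apply: (small _ _ e2 (mXpos k k') ht2 (he2 (k, k'))).
have rsY : row_stochastic (mY + t *: HY).
  apply: rs_perturb => // l l'; apply: (small _ _ e3 (mYpos l l') ht3 (he3 (l, l'))).
set Mt := Cinf (C + t *: E) (mX + t *: HX) (mY + t *: HY).
have fpt : fixed_point eps delta (C + t *: E) (mX + t *: HX) (mY + t *: HY) Mt := hC _ _ _ rsX rsY.
pose Nt : 'M[R]_(n, m) := M0 + t *: Vm.
have rowX : forall i, (fun k => (mX + t *: HX) i k) = (fun k => mX i k + t * HX i k).
  by move=> i; apply: funext => k; rewrite !mxE.
have rowY : forall j, (fun l => (mY + t *: HY) j l) = (fun l => mY j l + t * HY j l).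
  by move=> j; apply: funext => l; rewrite !mxE.
have cpl : forall i j, coupling (fun k => mX i k + t * HX i k) (fun l => mY j l + t * HY j l)
     (\matrix_(k, l) ((mX i k + t * HX i k) * (mY j l + t * HY j l))).
  move=> i j; case: rsX => rX0 rX1; case: rsY => rY0 rY1.
  apply: prod_coupling.
  - by move=> k; have := rX0 i k; rewrite !mxE.
  - by move=> l; have := rY0 j l; rewrite !mxE.
  - by rewrite -(rX1 i); apply: eq_bigr => k _; rewrite !mxE.
  - by rewrite -(rY1 j); apply: eq_bigr => l _; rewrite !mxE.
have sX : forall i, \sum_(k < n) (mX i k + t * HX i k) = 1.
  by move=> i; rewrite big_split /= hX1 -mulr_sumr sHX mulr0 addr0.
pose c := \big[Order.max/0]_(p : 'I_n * 'I_m) `|Mt p.1 p.2 - Nt p.1 p.2|.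
have hc : forall k l, `|Mt k l - Nt k l| <= c.
  by move=> k l; apply: (le_bigmax 0 (fun p : 'I_n * 'I_m => `|Mt p.1 p.2 - Nt p.1 p.2|) (k, l)).
have hc' : forall k l, `|Nt k l - Mt k l| <= c by move=> k l; rewrite distrC.
have entry : forall i j, `|Mt i j - Nt i j| <= (1 - delta) * c + (1 - delta) * (Kt * t ^+ 2).
  move=> i j.
  have l1 := dW_lip e0 (cpl i j) (sX i) (hc) .
  have l2 := dW_lip e0 (cpl i j) (sX i) (hc') .
  have [_ hK] := hKE (i, j); have := hK t (le_trans ht1 (he1 (i, j))) => /= hK'.
  have hK2 := hKt (i, j).
  have t2 : 0 <= t ^+ 2 := sqr_ge0 t.
  have hK3 : (KE (i, j)).1 * t ^+ 2 <= Kt * t ^+ 2 by rewrite ler_wpM2r.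
  have eqM : Mt i j = delta * (C i j + t * E i j) + (1 - delta) *
     dW eps (fun k => mX i k + t * HX i k) (fun l => mY j l + t * HY j l) Mt.
    by rewrite {1}fpt rowX rowY !mxE.
  have eqN : Nt i j = delta * C i j + (1 - delta) * ent0 i j + t * (delta * E i j + (1 - delta) * L i j).
    by rewrite /Nt !mxE base hvL.
  move: l1 l2 hK' hK3 eqM eqN.
  set W1 := dW _ _ _ Mt; set W2 := dW _ _ _ (M0 + t *: Vm).
  move: (ent0 i j) (L i j) (KE (i, j)).1 (Kt * t ^+ 2) => en LL K1 K2.
  move=> l1 l2 hK' hK3 -> ->.
  rewrite /Nt in l1 l2.
  have d2 : 0 <= 1 - delta by lra.
  move: hK'; rewrite ler_norml => /andP[k1 k2].
  have a1 : (1 - delta) * (W1 - W2) <= (1 - delta) * c by rewrite ler_wpM2l //; lra.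
  have a2 : (1 - delta) * (W2 - W1) <= (1 - delta) * c by rewrite ler_wpM2l //; lra.
  have a3 : (1 - delta) * (W2 - en - t * LL) <= (1 - delta) * K2 by rewrite ler_wpM2l //; lra.
  have a4 : (1 - delta) * (- K2) <= (1 - delta) * (W2 - en - t * LL) by rewrite ler_wpM2l //; lra.
  rewrite ler_norml; apply/andP; split; nra.
have hcb : c <= (1 - delta) * c + (1 - delta) * (Kt * t ^+ 2).
  apply: bigmax_le => [|p _]; last exact: entry.
  have c0 : 0 <= c by apply: (le_trans (normr_ge0 _) (hc i0 j0)).
  have : 0 <= Kt * t ^+ 2 by rewrite mulr_ge0 ?sqr_ge0.
  nra.
have c1 : c <= Kt / delta * t ^+ 2.
  rewrite mulrAC ler_pdivlMr //.
  have : 0 <= Kt * t ^+ 2 by rewrite mulr_ge0 ?sqr_ge0.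
  nra.
rewrite !scale0r !addr0 -/M0.
apply: le_trans c1; apply: le_trans (hc i0 j0).
by rewrite /Nt !mxE; rewrite -addrA opprD.
Qed.

Lemma sum_mi (R : realType) (n m : nat) (F : 'I_(n * m) -> R) :
  \sum_(r < n * m) F r = \sum_(i < n) \sum_(j < m) F (mxvec_index i j).
Proof.
rewrite (reindex _ (curry_mxvec_bij _ _)) /=.
by rewrite pair_bigA; apply: eq_bigr => -[i j].
Qed.

Lemma mi_eq (n m : nat) (i k : 'I_n) (j l : 'I_m) :
  (mxvec_index i j == mxvec_index k l) = (i == k) && (j == l).
Proof.
apply/eqP/andP => [h|[/eqP -> /eqP ->]] //.
move: h; rewrite /mxvec_index => /cast_ord_inj/enum_rank_inj [-> ->]; split => //.
Qed.

Lemma sum_pick (R : realType) (I : finType) (F : I -> R) (i0 : I) :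
  (forall i, i != i0 -> F i = 0) -> \sum_i F i = F i0.
Proof. by move=> h; rewrite (bigD1 i0) //= big1 ?addr0 // => i; exact: h. Qed.

Lemma eqP_sym (T : eqType) (x y : T) : x != y -> y != x.
Proof. by rewrite eq_sym. Qed.

Lemma flat4E (R : realType) (n1 n2 n3 n4 : nat) (T : 'I_n1 -> 'I_n2 -> 'I_n3 -> 'I_n4 -> R)
  i j k l : flat4 T (mxvec_index i j) (mxvec_index k l) = T i j k l.
Proof.
rewrite /flat4 summxE (@sum_pick _ _ _ i) => [|i' ni].
  rewrite summxE (@sum_pick _ _ _ j) => [|j' nj].
    rewrite summxE (@sum_pick _ _ _ k) => [|k' nk].
      rewrite summxE (@sum_pick _ _ _ l) => [|l' nl].
        by rewrite !mxE !eqxx mulr1.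
      by rewrite !mxE !mi_eq (negbTE (eqP_sym nl)) !andbF mulr0.
    rewrite summxE big1 // => l' _.
    by rewrite !mxE !mi_eq (negbTE (eqP_sym nk)) !andbF mulr0.
  rewrite summxE big1 // => k' _; rewrite summxE big1 // => l' _.
  by rewrite !mxE !mi_eq (negbTE (eqP_sym nj)) !andbF andFb mulr0.
rewrite summxE big1 // => j' _; rewrite summxE big1 // => k' _; rewrite summxE big1 // => l' _.
by rewrite !mxE !mi_eq (negbTE (eqP_sym ni)) !andFb mulr0.
Qed.

Lemma flat_ge0 (R : realType) (n m : nat) (P : 'I_n -> 'I_m -> 'M[R]_(n, m)) :
  (forall i j k l, 0 <= P i j k l) ->
  forall r c, 0 <= flat4 (fun i j k l => P i j k l) r c.
Proof.
move=> h r c; case/mxvec_indexP: r => i j; case/mxvec_indexP: c => k l.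
by rewrite flat4E.
Qed.

Lemma flat_rowsum (R : realType) (n m : nat) (P : 'I_n -> 'I_m -> 'M[R]_(n, m)) :
  (forall i j, \sum_(k < n) \sum_(l < m) P i j k l = 1) ->
  forall r, \sum_c flat4 (fun i j k l => P i j k l) r c = 1.
Proof.
move=> h r; case/mxvec_indexP: r => i j.
rewrite sum_mi -(h i j); apply: eq_bigr => k _; apply: eq_bigr => l _.
by rewrite flat4E.
Qed.

Lemma A_entry (R : realType) (n m : nat) (P : 'I_n -> 'I_m -> 'M[R]_(n, m)) (delta : R) r c :
  (1%:M - (1 - delta) *: flat4 (fun i j k l => P i j k l)) r c
  = (r == c)%:R - (1 - delta) * flat4 (fun i j k l => P i j k l) r c.
Proof. by rewrite !mxE. Qed.

Lemma A_unit (R : realType) (n m : nat) (P : 'I_n -> 'I_m -> 'M[R]_(n, m)) (delta : R) :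
  0 < delta <= 1 -> (forall i j k l, 0 <= P i j k l) ->
  (forall i j, \sum_(k < n) \sum_(l < m) P i j k l = 1) ->
  (1%:M - (1 - delta) *: flat4 (fun i j k l => P i j k l)) \in unitmx.
Proof.
move=> /andP[d0 d1] hP hS.
set Pf := flat4 _.
set A := 1%:M - _.
rewrite -unitmx_tr -row_free_unit -kermx_eq0.
apply/eqP/row_matrixP => r; rewrite row0.
set u := row r _.
have hu : u *m A^T = 0 by apply/sub_kermxP; exact: row_sub.
clearbody u.
have key : forall r', u 0 r' = (1 - delta) * \sum_c Pf r' c * u 0 c.
  move=> r'; have := congr1 (fun M : 'rV[R]_(n * m) => M 0 r') hu; rewrite !mxE /=.
  under eq_bigr do rewrite !mxE.
  have -> : \sum_c u 0 c * ((r' == c)%:R - (1 - delta) * Pf r' c)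
     = u 0 r' - (1 - delta) * \sum_c Pf r' c * u 0 c.
    rewrite mulr_sumr -(@sum_ind R _ (u 0) r') -sumrB; apply: eq_bigr => c _.
    by rewrite eq_sym; ring.
  by move/eqP; rewrite subr_eq0 => /eqP.
pose mu := \big[Order.max/0]_c `|u 0 c|.
have hmu : forall c, `|u 0 c| <= mu by move=> c; exact: (le_bigmax 0 (fun c => `|u 0 c|) c).
have mu0 : 0 <= mu by apply: le_trans (hmu r) ; [].
have bnd : forall r', `|u 0 r'| <= (1 - delta) * mu.
  move=> r'; rewrite key normrM ger0_norm; last lra.
  apply: ler_wpM2l; first lra.
  apply: (le_trans (ler_norm_sum _ _ _)).
  have -> : mu = \sum_c Pf r' c * mu by rewrite -mulr_suml flat_rowsum ?mul1r.
  apply: ler_sum => c _; rewrite normrM ger0_norm ?flat_ge0 //.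
  by apply: ler_wpM2l; [exact: flat_ge0|].
have : mu <= (1 - delta) * mu.
  apply: bigmax_le => [|c _]; last exact: bnd.
  by rewrite mulr_ge0 //; lra.
move=> h; have mu00 : mu = 0 by nra.
apply/rowP => c; rewrite mxE; apply/eqP; rewrite -normr_eq0 eq_le normr_ge0 andbT.
by rewrite -mu00.
Qed.

Lemma A_eq (R : realType) (n m : nat) (P : 'I_n -> 'I_m -> 'M[R]_(n, m)) (delta : R)
  (u w : 'cV[R]_(n * m)) :
  (1%:M - (1 - delta) *: flat4 (fun i j k l => P i j k l)) *m u = w ->
  forall i j, u (mxvec_index i j) 0 = w (mxvec_index i j) 0
     + (1 - delta) * \sum_(k < n) \sum_(l < m) P i j k l * u (mxvec_index k l) 0.
Proof.
move=> h i j; rewrite -h mxE.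
under eq_bigr do rewrite A_entry.
have -> : \sum_c ((mxvec_index i j == c)%:R - (1 - delta) * flat4 (fun i j k l => P i j k l) (mxvec_index i j) c) * u c 0
  = u (mxvec_index i j) 0 - (1 - delta) * \sum_c flat4 (fun i j k l => P i j k l) (mxvec_index i j) c * u c 0.
  rewrite mulr_sumr -(@sum_ind R _ (fun c => u c 0) (mxvec_index i j)) -sumrB.
  by apply: eq_bigr => c _; rewrite eq_sym; ring.
rewrite sum_mi.
have -> : \sum_(k < n) \sum_(l < m) flat4 (fun i j k l => P i j k l) (mxvec_index i j) (mxvec_index k l) * u (mxvec_index k l) 0 = \sum_(k < n) \sum_(l < m) P i j k l * u (mxvec_index k l) 0.
  by apply: eq_bigr => k _; apply: eq_bigr => l _; rewrite flat4E.
ring.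
Qed.

Lemma collapse (R : realType) (n p : nat) (i : 'I_n) (f : 'I_p -> R) (H : 'I_n -> 'I_p -> R) :
  \sum_(k < n) \sum_(k' < p) f k' * (i == k)%:R * H k k' = \sum_(k' < p) f k' * H i k'.
Proof.
rewrite (@sum_pick _ _ _ i) => [|k nk]; last first.
  by apply: big1 => k' _; rewrite eq_sym (negbTE nk) mulr0 mul0r.
by apply: eq_bigr => k' _; rewrite eqxx mulr1.
Qed.

Lemma cv_sum (R : realType) (n p q : nat) (M : 'M[R]_(q, n * p)) (H : 'M[R]_(n, p)) r :
  (M *m (mxvec H)^T) r 0 = \sum_(k < n) \sum_(k' < p) M r (mxvec_index k k') * H k k'.
Proof.
rewrite mxE sum_mi; apply: eq_bigr => k _; apply: eq_bigr => k' _.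
by rewrite mxE mxvecE.
Qed.

Unset Implicit Arguments. Set Strict Implicit. Set Printing Implicit Defensive.
Local Close Scope classical_set_scope.

Theorem theorem22 (R : realType) (n m : nat) (mX : 'M[R]_n) (mY : 'M[R]_m)
  (C : 'M[R]_(n, m)) (delta eps : R)
  (Cinf : 'M[R]_(n, m) -> 'M[R]_n -> 'M[R]_m -> 'M[R]_(n, m))
  (P : 'I_n -> 'I_m -> 'M[R]_(n, m))
  (f : 'I_n -> 'I_m -> 'I_n -> R) (g : 'I_n -> 'I_m -> 'I_m -> R) :
  row_stochastic mX -> row_stochastic mY ->
  (forall k l, 0 <= C k l) ->
  0 < delta <= 1 -> 0 < eps ->
  (* Cinf C' mX' mY' is the unique solution of the fixed-point equation *)
  (forall C' mX' mY', row_stochastic mX' -> row_stochastic mY' ->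
     fixed_point eps delta C' mX' mY' (Cinf C' mX' mY') /\
     (forall M, fixed_point eps delta C' mX' mY' M -> M = Cinf C' mX' mY')) ->
  (forall i j, opt_plan eps (fun k => mX i k) (fun l => mY j l)
                 (Cinf C mX mY) (P i j)) ->
  (forall i j, opt_dual eps (fun k => mX i k) (fun l => mY j l)
                 (Cinf C mX mY) (f i j) (g i j)) ->
  let A := 1%:M - (1 - delta) *: flat4 (fun i j k l => P i j k l) in
  let Fm := flat4 (fun i j (k k' : 'I_n) => f i j k' * (i == k)%:R) in
  let Gm := flat4 (fun i j (l l' : 'I_m) => g i j l' * (j == l)%:R) in
  let Delta := delta *: invmx A in
  let Gamma := (1 - delta) *: (invmx A *m Fm) in
  let Theta := (1 - delta) *: (invmx A *m Gm) in
  [/\ A \in unitmx,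
      (* Delta^{kl}_{ij} = d Cinf_ij / d C_kl *)
      (forall i j k l,
         is_derive (0 : R) (1 : R)
           (fun t => Cinf (C + t *: delta_mx k l) mX mY i j)
           (Delta (mxvec_index i j) (mxvec_index k l))),
      (* Gamma: derivative w.r.t. mX along any direction H keeping mX row-stochastic *)
      (forall H : 'M[R]_n, (forall k, \sum_(k' < n) H k k' = 0) ->
       forall i j,
         is_derive (0 : R) (1 : R)
           (fun t => Cinf C (mX + t *: H) mY i j)
           (\sum_(k < n) \sum_(k' < n)
              Gamma (mxvec_index i j) (mxvec_index k k') * H k k')) &
      (* Theta: derivative w.r.t. mY along any direction H keeping mY row-stochastic *)
      (forall H : 'M[R]_m, (forall l, \sum_(l' < m) H l l' = 0) ->
       forall i j,
         is_derive (0 : R) (1 : R)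
           (fun t => Cinf C mX (mY + t *: H) i j)
           (\sum_(l < m) \sum_(l' < m)
              Theta (mxvec_index i j) (mxvec_index l l') * H l l'))].
Proof.
move=> hX hY _ hd he hC hP hD A Fm Gm Delta Gamma Theta.
have Pnn : forall i j k l, 0 <= P i j k l.
  by move=> i j k l; case: (hP i j) => -[p0 _ _] _; exact: p0.
have Psum : forall i j, \sum_(k < n) \sum_(l < m) P i j k l = 1.
  move=> i j; case: (hP i j) => -[_ hr _] _; case: hX => _ h1.
  by rewrite -(h1 i); apply: eq_bigr => k _; rewrite hr.
have Au : A \in unitmx := A_unit hd Pnn Psum.
have hC' : forall C' mX' mY', row_stochastic mX' -> row_stochastic mY' ->
     fixed_point eps delta C' mX' mY' (Cinf C' mX' mY').
  by move=> C' mX' mY' h1 h2; case: (hC C' mX' mY' h1 h2).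
have AinvA : A *m invmx A = 1%:M by rewrite mulmxV.
have s0n : forall k : 'I_n, \sum_(k' < n) (0 : 'M[R]_n) k k' = 0.
  by move=> k; apply: big1 => k' _; rewrite mxE.
have s0m : forall l : 'I_m, \sum_(l' < m) (0 : 'M[R]_m) l l' = 0.
  by move=> l; apply: big1 => l' _; rewrite mxE.
have z1 : forall i j, \sum_(k < n) f i j k * (0 : 'M[R]_n) i k = 0.
  by move=> i j; apply: big1 => k _; rewrite mxE mulr0.
have z2 : forall i j, \sum_(l < m) g i j l * (0 : 'M[R]_m) j l = 0.
  by move=> i j; apply: big1 => l _; rewrite mxE mulr0.
split => //.
- move=> i j k l.
  pose e : 'cV[R]_(n * m) := delta_mx (mxvec_index k l) 0.
  pose u := Delta *m e.
  have ue : forall r, u r 0 = Delta r (mxvec_index k l).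
    move=> r; rewrite mxE (@sum_pick _ _ _ (mxvec_index k l)) => [|c nc].
      by rewrite /e [delta_mx _ _ _ _]mxE !eqxx mulr1.
    by rewrite /e [delta_mx _ _ _ _]mxE (negbTE nc) mulr0.
  have Au' : A *m u = delta *: e.
    by rewrite /u /Delta -scalemxAl scalemxAr mulmxA AinvA mul1mx.
  have hv := A_eq Au'.
  have := @main_deriv R n m mX mY C delta eps Cinf P f g hX hY hd he hC' hP hD
    (delta_mx k l) 0 0 s0n s0m (fun i j => u (mxvec_index i j) 0).
  move=> /(_ _ i j).
  have -> : (fun t => Cinf (C + t *: delta_mx k l) (mX + t *: 0) (mY + t *: 0) i j)
          = (fun t => Cinf (C + t *: delta_mx k l) mX mY i j).
    by apply: funext => t; rewrite !scaler0 !addr0.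
  rewrite ue; apply => i' j'.
  rewrite hv z1 z2 !addr0; congr (_ + _).
  by rewrite /e !mxE mi_eq andbT.
- move=> H sH i j.
  pose u := Gamma *m (mxvec H)^T.
  have ue : forall r, u r 0 = \sum_(k < n) \sum_(k' < n) Gamma r (mxvec_index k k') * H k k'.
    by move=> r; rewrite cv_sum.
  have Au' : A *m u = (1 - delta) *: (Fm *m (mxvec H)^T).
    by rewrite /u /Gamma -scalemxAl scalemxAr !mulmxA AinvA mul1mx scalemxAr.
  have hv := A_eq Au'.
  have := @main_deriv R n m mX mY C delta eps Cinf P f g hX hY hd he hC' hP hD
    0 H 0 sH s0m (fun i j => u (mxvec_index i j) 0).
  move=> /(_ _ i j).
  have -> : (fun t => Cinf (C + t *: 0) (mX + t *: H) (mY + t *: 0) i j)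
          = (fun t => Cinf C (mX + t *: H) mY i j).
    by apply: funext => t; rewrite !scaler0 !addr0.
  rewrite ue; apply => i' j'.
  rewrite hv z2 addr0 [in RHS]mxE mulr0 add0r mulrDr addrC; congr (_ + _).
  rewrite mxE cv_sum; congr (_ * _).
  under eq_bigr do under eq_bigr do rewrite flat4E.
  by rewrite collapse.
- move=> H sH i j.
  pose u := Theta *m (mxvec H)^T.
  have ue : forall r, u r 0 = \sum_(l < m) \sum_(l' < m) Theta r (mxvec_index l l') * H l l'.
    by move=> r; rewrite cv_sum.
  have Au' : A *m u = (1 - delta) *: (Gm *m (mxvec H)^T).
    by rewrite /u /Theta -scalemxAl scalemxAr !mulmxA AinvA mul1mx scalemxAr.
  have hv := A_eq Au'.
  have := @main_deriv R n m mX mY C delta eps Cinf P f g hX hY hd he hC' hP hD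
    0 0 H s0n sH (fun i j => u (mxvec_index i j) 0).
  move=> /(_ _ i j).
  have -> : (fun t => Cinf (C + t *: 0) (mX + t *: 0) (mY + t *: H) i j)
          = (fun t => Cinf C mX (mY + t *: H) i j).
    by apply: funext => t; rewrite !scaler0 !addr0.
  rewrite ue; apply => i' j'.
  rewrite hv z1 addr0 [in RHS]mxE mulr0 add0r mulrDr addrC; congr (_ + _).
  rewrite mxE cv_sum; congr (_ * _).
  under eq_bigr do under eq_bigr do rewrite flat4E.
  by rewrite collapse.
Qed.
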